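(* Let $\xi_1,\xi_2,\ldots$ be i.i.d.\ nonnegative real random variables with $\overline F(x):=\P(\xi_1\geq x)=x^{-1}\ell(x)$ for $x\to\infty$, where $\ell$ is slowly varying. Let $G(x):=\int_0^x\overline F(t)\,dt$ and $S_k:=\sum_{i=1}^k\xi_i$. Let $(x_n)_{n\geq1}$ be a positive sequence with $\liminf_{n\to\infty}\frac{x_n}{nG(x_n)}>0$ and let $(a_n)_{n\geq1}$ be a positive sequence with $\lim_{n\to\infty}a_n\in(0,\infty)$. Let $(y_n)_{n\geq1}$ be a positive sequence such that, as $n\to\infty$: $y_n\to\infty$, $y_n=o(x_n)$, $ny_n^2\overline F(x_n)\to0$, $\overline F(x_n/y_n)\sim y_n\overline F(x_n)$, and $G(x_n/y_n)\sim G(x_n)$. Let $C>0$ be a constant such that $$\operatorname{Var}\left(\xi_1\mathbf 1_{\{\xi_1<x_n/y_n\}}\right)\leq C\,\frac{x_n^2\overline F(x_n)}{y_n}\quad\text{for all } n\geq1.$$ Then for all $n$ large enough, $$\P(S_k-kG(x_n)\leq -a_nx_n)\leq \frac{4Ck\overline F(x_n)}{a_n^2y_n}\quad\text{for all }1\leq k\leq n.$$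
   Context: A function $\ell$ is slowly varying if $\ell(\lambda x)/\ell(x)\to1$ as $x\to\infty$ for every $\lambda>0$. For sequences, $u_n\sim v_n$ means $u_n/v_n\to1$ as $n\to\infty$. *)

(* Defs.v *)
From HB Require Import structures.
From mathcomp Require Import all_boot all_order all_algebra.
From mathcomp Require Import all_classical all_reals all_analysis.
Set Implicit Arguments. Unset Strict Implicit. Unset Printing Implicit Defensive.
Import Order.TTheory GRing.Theory Num.Theory.
Import numFieldNormedType.Exports.
Local Open Scope classical_set_scope.
Local Open Scope ring_scope.

Definition slowly_varying (R : realType) (l : R -> R) : Prop :=
  forall lam : R, 0 < lam -> (l (lam * x) / l x) @[x --> +oo] --> (1 : R).

Definition seq_equiv (R : realType) (u v : R ^nat) : Prop :=
  (fun n => u n / v n) @ \oo --> (1 : R).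

Definition mutually_independent d (T : measurableType d) (R : realType)
  (P : probability T R) (X : nat -> T -> R) : Prop :=
  forall (I : seq nat) (B : nat -> set R), uniq I ->
    (forall i, i \in I -> measurable (B i)) ->
    P (\big[setI/setT]_(i <- I) (X i @^-1` B i)) =
    (\prod_(i <- I) P (X i @^-1` B i))%E.

Definition identically_distributed d (T : measurableType d) (R : realType)
  (P : probability T R) (X : nat -> T -> R) : Prop :=
  forall i (B : set R), measurable B -> P (X i @^-1` B) = P (X 0%N @^-1` B).

Definition tailF d (T : measurableType d) (R : realType)
  (P : probability T R) (X : T -> R) (x : R) : R :=
  fine (P [set w | x <= X w]).

Definition intTail d (T : measurableType d) (R : realType)
  (P : probability T R) (X : T -> R) (x : R) : R :=
  Rintegral (@lebesgue_measure R) `[0, x] (tailF P X).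

(* Main.v *)
Require Import Defs.
From HB Require Import structures.
From mathcomp Require Import all_boot all_order all_algebra.
From mathcomp Require Import all_classical all_reals all_analysis.
From mathcomp Require Import measurable_realfun.
From mathcomp Require Import ring lra.
Import Order.TTheory GRing.Theory Num.Theory.
Import numFieldNormedType.Exports.
Local Open Scope classical_set_scope.
Local Open Scope ring_scope.


Section layer.
Local Open Scope ereal_scope.
Context d (T : measurableType d) (R : realType) (P : probability T R).
Let mu : {measure set _ -> \bar R} := @lebesgue_measure R.

Lemma my_expectation_preimage (X : {RV P >-> R}) : (forall x, 0 <= X x)%R ->
  'E_P[X] = \int[mu]_(r in `[0%R, +oo[) P (X @^-1` `[r, +oo[).
Proof.
have mPeqr : measurable_fun setT (fun r : R => P (X @^-1` [set r])).
  apply: (eq_measurable_fun (EFin \o pmf X)) => [r/= _|].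
    by rewrite fineK// fin_num_measure.
  by apply/measurable_EFinP; exact: pmf_measurable.
have mPgtr : measurable_fun setT (fun r : R => P (X @^-1` `]r, +oo[)).
  exact: ccdf_measurable.
move=> X_ge0; rewrite ge0_expectation_ccdf//.
transitivity
    (\int[mu]_(r in `[0%R, +oo[) (P (X @^-1` [set r]) + P (X @^-1` `]r, +oo[))).
  rewrite ge0_integralD//; [|exact: measurable_funTS..].
  rewrite [X in _ = X + _](_ : _ = 0) ?add0e; first exact: eq_integral.
  rewrite -(lebesgue_integral_pmf X) integral_mkcond.
  apply: eq_integral => /= r _.
  rewrite patchE; have [r_ge0 | r_lt0] := boolP (r \in `[0%R, +oo[).
  - by rewrite ifT ?inE// fineK ?fin_num_measure.
  - rewrite mem_setE (negbTE r_lt0) fineK ?fin_num_measure//.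
    rewrite (_ : _ @^-1` _ = set0) ?measure0//.
    rewrite -nonemptyPn; apply: contraNnot r_lt0.
    by case=> x <-; rewrite in_itv/= andbT.
apply: eq_integral =>/= r _; rewrite -measureU//.
- by rewrite -preimage_setU setU1itv.
- exact: measurable_funPTI.
- by rewrite -preimage_setI -subset0 => x/= [->]; rewrite in_itv/= ltxx.
Qed.

Lemma layer_cake (X : T -> R) : measurable_fun setT X -> (forall x, 0 <= X x)%R ->
  'E_P[X] = \int[mu]_(r in `[0%R, +oo[) P (X @^-1` `[r, +oo[).
Proof.
move=> mX X0.
have mX' : X \in mfun by rewrite inE.
exact: (@my_expectation_preimage (mfun_Sub mX')).
Qed.
End layer.


Section basic.
Context d (T : measurableType d) (R : realType) (P : probability T R).

Lemma Lfun_bdd (f : T -> R) (M : R) (r : R) : 1 <= r -> measurable_fun setT f ->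
  (forall x, `|f x| <= M) -> f \in Lfun P r%:E.
Proof.
move=> r1 mf fM.
have p0 : (0 < r)%R by rewrite (lt_le_trans ltr01).
rewrite inE; apply/andP; split; rewrite inE//=.
rewrite /finite_norm unlock /Lnorm.
rewrite poweR_lty//.
rewrite (@le_lt_trans _ _ (\int[P]_x (M `^ r)%:E)%E); [by []| |]; last first.
  by rewrite integral_cst// ltey_eq fin_numM// fin_num_measure.
under eq_integral => x _ do rewrite /comp abse_EFin poweR_EFin.
apply: ge0_le_integral => //.
all: try (by move=> x _; rewrite lee_fin powR_ge0).
+ apply/measurable_EFinP.
  apply: (@measurableT_comp _ _ _ _ _ _ (@powR R ^~ r)) => //.
  exact: measurableT_comp.
+ move=> x _; rewrite lee_fin ge0_ler_powR// ?nnegrE//.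
  - exact: ltW.
  - exact: (le_trans _ (fM x)).
Qed.

Definition Ef (f : T -> R) : R := fine ('E_P[f])%E.
Definition bm (f : T -> R) := measurable_fun setT f /\ exists M, forall x, `|f x| <= M.

Lemma bm_L1 {f} : bm f -> f \in Lfun P 1%E.
Proof. by case=> mf [M fM]; apply: (@Lfun_bdd _ M 1). Qed.

Lemma bm_L2 {f} : bm f -> f \in Lfun P 2%:E.
Proof. by case=> mf [M fM]; apply: (@Lfun_bdd _ M 2) => //; rewrite ler1n. Qed.

Lemma EfE {f} : bm f -> ('E_P[f] = (Ef f)%:E)%E.
Proof. by move=> /bm_L1 /expectation_fin_num /fineK. Qed.

Lemma bm_cst c : bm (fun _ => c).
Proof. by split => //; exists `|c|. Qed.

Lemma bmD {f g} : bm f -> bm g -> bm (fun x => f x + g x).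
Proof.
case=> mf [M fM] [mg [N gN]]; split; first exact: measurable_funD.
by exists (M + N) => x; rewrite (le_trans (ler_normD _ _))// lerD.
Qed.

Lemma bmM {f g} : bm f -> bm g -> bm (fun x => f x * g x).
Proof.
case=> mf [M fM] [mg [N gN]]; split; first exact: measurable_funM.
by exists (M * N) => x; rewrite normrM ler_pM.
Qed.

Lemma bmZ {k f} : bm f -> bm (fun x => k * f x).
Proof. by move=> hf; apply: bmM => //; exact: bm_cst. Qed.

Lemma bm_indic (A : set T) : measurable A -> bm (\1_A : T -> R).
Proof.
move=> mA; split; first exact: measurable_indic.
by exists 1 => x; rewrite indicE; case: (x \in A); rewrite ?normr1 ?normr0.
Qed.

Lemma bm_sum (F : nat -> T -> R) m : (forall l, bm (F l)) ->
  bm (fun x => \sum_(l < m) F l x).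
Proof.
move=> hF; elim: m => [|m IH].
  under eq_fun do rewrite big_ord0; exact: bm_cst.
under eq_fun do rewrite big_ord_recr /=; exact: bmD.
Qed.

Lemma Ef_ext f g : (forall x, f x = g x) -> Ef f = Ef g.
Proof. by move=> fg; congr Ef; apply/funext. Qed.

Lemma EfD {f g} : bm f -> bm g -> Ef (fun x => f x + g x) = Ef f + Ef g.
Proof.
move=> hf hg; rewrite /Ef.
have -> : ('E_P[fun x => (f x + g x)%R] = 'E_P[f] + 'E_P[g])%E.
  exact: expectationD (bm_L1 hf) (bm_L1 hg).
by rewrite (EfE hf) (EfE hg) -EFinD.
Qed.

Lemma EfZ k {f} : bm f -> Ef (fun x => k * f x) = k * Ef f.
Proof.
move=> hf; rewrite (@Ef_ext _ (fun x => f x * k)); last by move=> x; rewrite mulrC.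
rewrite /Ef.
have -> : ('E_P[fun x => (f x * k)%R] = k%:E * 'E_P[f])%E.
  exact: expectationZl (bm_L1 hf).
by rewrite (EfE hf) -EFinM.
Qed.

Lemma Ef_cst c : Ef (fun _ => c) = c.
Proof. by rewrite /Ef (_ : (fun _ => c) = cst c)// expectation_cst. Qed.

Lemma Ef_indic (A : set T) : measurable A -> Ef (\1_A) = fine (P A).
Proof. by move=> mA; rewrite /Ef expectation_indic. Qed.

Lemma Ef_ge0 {f} : bm f -> (forall x, 0 <= f x) -> 0 <= Ef f.
Proof. by move=> hf f0; rewrite /Ef fine_ge0// expectation_ge0. Qed.

Lemma Ef_le {f g} : bm f -> bm g -> (forall x, f x <= g x) -> Ef f <= Ef g.
Proof.
move=> hf hg fg.
have h1 : bm (fun x => (-1) * f x) by exact: bmZ.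
have H : 0 <= Ef (fun x => g x + (-1) * f x).
  by apply: (Ef_ge0 (bmD hg h1)) => x; have := fg x; lra.
rewrite EfD// EfZ// in H; lra.
Qed.

Lemma Ef_sum (F : nat -> T -> R) m : (forall l, bm (F l)) ->
  Ef (fun x => \sum_(l < m) F l x) = \sum_(l < m) Ef (F l).
Proof.
move=> hF; elim: m => [|m IH].
  by rewrite big_ord0 (@Ef_ext _ (fun _ => 0)) ?Ef_cst// => x; rewrite big_ord0.
rewrite big_ord_recr /= -IH -EfD//; last exact: bm_sum.
by apply: Ef_ext => x; rewrite big_ord_recr.
Qed.


Definition cnt (m : nat) (dl t : R) : R :=
  \sum_(l < m) (if l.+1%:R * dl <= t then 1 else 0).

Lemma cnt0 m dl t : 0 < dl -> t < dl -> cnt m dl t = 0.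
Proof.
move=> d0 tl; rewrite /cnt big1// => l _; rewrite ifF//.
apply/negbTE; rewrite -ltNge; apply: (lt_le_trans tl).
have : 1 <= l.+1%:R :> R by rewrite ler1n.
move=> h; nra.
Qed.

Lemma cnt_bounds {m dl t} : 0 < dl -> 0 <= t ->
  dl * cnt m dl t <= t /\ (t <= m%:R * dl -> t - dl < dl * cnt m dl t).
Proof.
move=> d0; elim: m t => [|m IH] t t0.
  rewrite /cnt big_ord0 mulr0; split => // h; nra.
have [tl|lt] := ltP t dl.
  rewrite cnt0// mulr0; split => //; lra.
have -> : cnt m.+1 dl t = 1 + cnt m dl (t - dl).
  rewrite /cnt big_ord_recl /= mul1r ifT//; congr (_ + _).
  apply: eq_bigr => l _; rewrite /bump /= add1n -(natr1 l.+1) mulrDl mul1r.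
  by rewrite lerBrDr.
have [h1 h2] := IH (t - dl) (ltac:(lra)).
split; first nra.
move=> h; have : t - dl <= m%:R * dl.
  by move: h; rewrite -natr1 mulrDl mul1r; lra.
move=> /h2; nra.
Qed.

Lemma mes_ge (f : T -> R) c : measurable_fun setT f -> measurable [set w | c <= f w].
Proof.
move=> mf; have := measurable_fun_le measurableT (measurable_cst c) mf.
by rewrite setTI.
Qed.

Lemma Ef_prod_indep (X Y : T -> R) (M : R) : 0 < M ->
  measurable_fun setT X -> measurable_fun setT Y ->
  (forall w, 0 <= X w <= M) -> (forall w, 0 <= Y w <= M) ->
  (forall s t, P ([set w | s <= X w] `&` [set w | t <= Y w]) =
               (P [set w | (s <= X w)%R] * P [set w | (t <= Y w)%R])%E) ->
  Ef (fun w => X w * Y w) = Ef X * Ef Y.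
Proof.
move=> M0 mX mY hX hY hind.
have bmX : bm X.
  split=> //; exists M => w; case/andP: (hX w) => h1 h2; by rewrite ger0_norm.
have bmY : bm Y.
  split=> //; exists M => w; case/andP: (hY w) => h1 h2; by rewrite ger0_norm.
have bmXY : bm (fun w => X w * Y w) by exact: bmM.
have key : forall m, (0 < m)%N ->
    `|Ef (fun w => X w * Y w) - Ef X * Ef Y| <= 2 * M * (M / m%:R).
  move=> m m0.
  have mR : 0 < m%:R :> R by rewrite ltr0n.
  set dl := M / m%:R.
  have dl0 : 0 < dl by rewrite divr_gt0.
  have mdl : m%:R * dl = M by rewrite /dl; field; lra.
  pose A l := [set w | l.+1%:R * dl <= X w].
  pose B l := [set w | l.+1%:R * dl <= Y w].
  have mA l : measurable (A l) by exact: mes_ge.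
  have mB l : measurable (B l) by exact: mes_ge.
  pose DX w := dl * \sum_(l < m) (\1_(A l) w : R).
  pose DY w := dl * \sum_(l < m) (\1_(B l) w : R).
  have eA l w : (\1_(A l) w : R) = if l.+1%:R * dl <= X w then 1 else 0.
    rewrite indicE; case: ifPn => h; first by rewrite mem_set.
    by rewrite memNset//=; apply/negP.
  have eB l w : (\1_(B l) w : R) = if l.+1%:R * dl <= Y w then 1 else 0.
    rewrite indicE; case: ifPn => h; first by rewrite mem_set.
    by rewrite memNset//=; apply/negP.
  have hDX w : 0 <= DX w /\ DX w <= X w /\ X w - dl < DX w.
    have -> : DX w = dl * cnt m dl (X w).
      by rewrite /DX /cnt; congr (_ * _); apply: eq_bigr => l _; rewrite eA.
    case/andP: (hX w) => h1 h2.
    have [c1 c2] := @cnt_bounds m dl (X w) dl0 h1.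
    split; first by apply: mulr_ge0; [lra| apply: sumr_ge0 => l _; case: ifP].
    by split => //; apply: c2; rewrite mdl.
  have hDY w : 0 <= DY w /\ DY w <= Y w /\ Y w - dl < DY w.
    have -> : DY w = dl * cnt m dl (Y w).
      by rewrite /DY /cnt; congr (_ * _); apply: eq_bigr => l _; rewrite eB.
    case/andP: (hY w) => h1 h2.
    have [c1 c2] := @cnt_bounds m dl (Y w) dl0 h1.
    split; first by apply: mulr_ge0; [lra| apply: sumr_ge0 => l _; case: ifP].
    by split => //; apply: c2; rewrite mdl.
  have bmA : bm (fun w => \sum_(l < m) (\1_(A l) w : R)).
    by apply: (bm_sum (fun l => \1_(A l)) m) => l; exact: bm_indic.
  have bmB : bm (fun w => \sum_(l < m) (\1_(B l) w : R)).
    by apply: (bm_sum (fun l => \1_(B l)) m) => l; exact: bm_indic.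
  have bmDX : bm DX by exact: bmZ.
  have bmDY : bm DY by exact: bmZ.
  have bmDXY : bm (fun w => DX w * DY w) by exact: bmM.
  have EDX : Ef DX = dl * \sum_(l < m) fine (P (A l)).
    rewrite /DX EfZ// (Ef_sum (fun l => \1_(A l)) m); last by move=> l; exact: bm_indic.
    by congr (_ * _); apply: eq_bigr => l _; rewrite Ef_indic.
  have EDY : Ef DY = dl * \sum_(l < m) fine (P (B l)).
    rewrite /DY EfZ// (Ef_sum (fun l => \1_(B l)) m); last by move=> l; exact: bm_indic.
    by congr (_ * _); apply: eq_bigr => l _; rewrite Ef_indic.
  have hprod : Ef (fun w => DX w * DY w) = Ef DX * Ef DY.
    have bmAB l : bm (fun w => \sum_(l' < m) (\1_(A l `&` B l') w : R)).
      apply: (bm_sum (fun l' => \1_(A l `&` B l')) m) => l'.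
      by apply: bm_indic; exact: measurableI.
    rewrite (@Ef_ext _ (fun w => (dl * dl) *
        \sum_(l < m) \sum_(l' < m) (\1_(A l `&` B l') w : R))); last first.
      move=> w; rewrite /DX /DY mulrACA big_distrlr /=; congr (_ * _).
      by apply: eq_bigr => l _; apply: eq_bigr => l' _; rewrite indicI.
    rewrite EfZ; last exact: (bm_sum (fun l w => \sum_(l' < m) (\1_(A l `&` B l') w : R)) m).
    rewrite (Ef_sum (fun l w => \sum_(l' < m) (\1_(A l `&` B l') w : R)) m)//.
    rewrite EDX EDY [RHS]mulrACA mulr_suml; congr (_ * _).
    apply: eq_bigr => l _; rewrite mulr_sumr.
    rewrite (Ef_sum (fun l' => \1_(A l `&` B l')) m); last first.
      by move=> l'; apply: bm_indic; exact: measurableI.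
    apply: eq_bigr => l' _; rewrite Ef_indic; last exact: measurableI.
    rewrite (hind (l.+1%:R * dl) (l'.+1%:R * dl)) fineM; [by []|apply: fin_num_measure; exact: mes_ge..].
  have p1 : Ef (fun w => DX w * DY w) <= Ef (fun w => X w * Y w).
    apply: Ef_le => // w.
    have [a1 [a2 a3]] := hDX w; have [b1 [b2 b3]] := hDY w.
    case/andP: (hX w) => x1 x2; case/andP: (hY w) => y1 y2; nra.
  have p2 : Ef (fun w => X w * Y w) <= Ef (fun w => DX w * DY w) + 2 * M * dl.
    rewrite -[X in _ + X](Ef_cst) -EfD//; last exact: bm_cst.
    apply: Ef_le => //; first by apply: bmD => //; exact: bm_cst.
    move=> w.
    have [a1 [a2 a3]] := hDX w; have [b1 [b2 b3]] := hDY w.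
    case/andP: (hX w) => x1 x2; case/andP: (hY w) => y1 y2; nra.
  have q1 : Ef DX <= Ef X by apply: Ef_le => // w; have [? [? ?]] := hDX w.
  have q2 : Ef X <= Ef DX + dl.
    rewrite -[X in _ + X](Ef_cst) -EfD//; last exact: bm_cst.
    apply: Ef_le => //; first by apply: bmD => //; exact: bm_cst.
    by move=> w; have [? [? ?]] := hDX w; lra.
  have q3 : 0 <= Ef DX by apply: Ef_ge0 => // w; have [? [? ?]] := hDX w.
  have q4 : Ef X <= M.
    rewrite -[X in _ <= X](Ef_cst M); apply: Ef_le => //; first exact: bm_cst.
    by move=> w; case/andP: (hX w).
  have r1 : Ef DY <= Ef Y by apply: Ef_le => // w; have [? [? ?]] := hDY w.
  have r2 : Ef Y <= Ef DY + dl.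
    rewrite -[X in _ + X](Ef_cst) -EfD//; last exact: bm_cst.
    apply: Ef_le => //; first by apply: bmD => //; exact: bm_cst.
    by move=> w; have [? [? ?]] := hDY w; lra.
  have r3 : 0 <= Ef DY by apply: Ef_ge0 => // w; have [? [? ?]] := hDY w.
  have r4 : Ef Y <= M.
    rewrite -[X in _ <= X](Ef_cst M); apply: Ef_le => //; first exact: bm_cst.
    by move=> w; case/andP: (hY w).
  rewrite hprod in p1 p2.
  rewrite ler_norml; apply/andP; split; nra.
set z := Ef (fun w => X w * Y w) - Ef X * Ef Y.
apply/eqP; rewrite -subr_eq0 -/z -normr_eq0; apply/negPn/negP => hz.
have z0 : 0 < `|z| by rewrite lt_def hz normr_ge0.
have c0 : 0 < 2 * M * M by nra.
have [k hk] := ltr_add_invr (divr_gt0 z0 c0).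
rewrite add0r in hk.
have := key k.+1 isT.
have -> : 2 * M * (M / k.+1%:R) = (2 * M * M) * k.+1%:R^-1 by rewrite mulrA.
have : (2 * M * M) * k.+1%:R^-1 < (2 * M * M) * (`|z| / (2 * M * M)).
  by rewrite ltr_pM2l.
rewrite [X in _ < X]mulrC divfK; last by rewrite gt_eqF.
move=> h1 h2; have := lt_le_trans h1 h2; by rewrite ltxx.
Qed.

End basic.


Arguments Ef {d T R} P f.
Arguments bm {d T R} f.
Arguments bm_L1 {d T R P f}.
Arguments bm_L2 {d T R P f}.
Arguments EfE {d T R P f}.
Arguments bm_cst {d T R}.
Arguments bmD {d T R f g}.
Arguments bmM {d T R f g}.
Arguments bmZ {d T R k f}.
Arguments bm_indic {d T R A}.
Arguments bm_sum {d T R} F m.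
Arguments Ef_ext {d T R P f g}.
Arguments EfD {d T R P f g}.
Arguments EfZ {d T R P} k {f}.
Arguments Ef_cst {d T R P}.
Arguments Ef_indic {d T R P A}.
Arguments Ef_ge0 {d T R P f}.
Arguments Ef_le {d T R P f g}.
Arguments Ef_sum {d T R P} F m.
Arguments Ef_prod_indep {d T R P X Y} M.
Arguments mes_ge {d T R f} c.
Arguments layer_cake {d T R P X}.

Section core.
Context d (T : measurableType d) (R : realType) (P : probability T R)
  (xi : nat -> T -> R).
Hypotheses (mxi : forall i, measurable_fun setT (xi i))
  (hind : mutually_independent P xi) (hid : identically_distributed P xi)
  (hpos : forall i w, 0 <= xi i w).
Variable u : R.
Hypothesis u0 : 0 < u.

Definition etaT i w := xi i w * \1_[set w' | xi i w' < u] w.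
Definition h (r : R) := r * \1_[set r' : R | r' < u] r.

Lemma eta_h i w : etaT i w = h (xi i w).
Proof.
rewrite /etaT /h !indicE; congr (_ * _%:R).
Qed.

Lemma mh : measurable_fun setT h.
Proof.
apply: measurable_funM => //.
apply: measurable_indic.
have -> : [set r' : R | r' < u] = `]-oo, u[%classic.
  by apply/seteqP; split => r; rewrite /= in_itv.
exact: measurable_itv.
Qed.

Lemma h_bnd r : 0 <= r -> 0 <= h r <= u.
Proof.
move=> r0; rewrite /h indicE.
have [ru|ru] := ltP r u.
  by rewrite mem_set// mulr1 r0 ltW.
by rewrite memNset ?mulr0 ?lexx ?ltW//= ltNge ru.
Qed.

Lemma eta_fun i : etaT i = (fun w => h (xi i w)).
Proof. by apply/funext => w; exact: eta_h. Qed.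

Lemma meta i : measurable_fun setT (etaT i).
Proof. by rewrite eta_fun; exact: measurableT_comp mh (mxi i). Qed.

Lemma eta_bnd i w : 0 <= etaT i w <= u.
Proof. by rewrite eta_h; exact: h_bnd. Qed.

Lemma eta_le i w : etaT i w <= xi i w.
Proof.
rewrite /etaT indicE; case: (w \in _); rewrite ?mulr1// mulr0; exact: hpos.
Qed.

Lemma bm_eta i : bm (etaT i).
Proof.
split; first exact: meta.
exists u => w; case/andP: (eta_bnd i w) => h1 h2; by rewrite ger0_norm.
Qed.

Lemma E_ident (f : R -> R) i : measurable_fun setT f -> (forall r, 0 <= r -> 0 <= f r) ->
  ('E_P[fun w => f (xi i w)] = 'E_P[fun w => f (xi 0%N w)])%E.
Proof.
move=> mf f0.
have m1 : measurable_fun setT (fun w => f (xi i w)) by exact: measurableT_comp mf (mxi i).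
have m2 : measurable_fun setT (fun w => f (xi 0%N w)) by exact: measurableT_comp mf (mxi 0%N).
rewrite (layer_cake m1); last by move=> w; exact: f0.
rewrite (layer_cake m2); last by move=> w; exact: f0.
apply: eq_integral => r _.
apply: (hid i (f @^-1` `[r, +oo[%classic)).
by have := mf measurableT _ (measurable_itv `[r, +oo[); rewrite setTI.
Qed.

Lemma Ef_eta i : Ef P (etaT i) = Ef P (etaT 0%N).
Proof.
rewrite /Ef !eta_fun E_ident//; first exact: mh.
by move=> r r0; case/andP: (h_bnd _ r0).
Qed.


Lemma Var_eta i : 'V_P[etaT i] = 'V_P[etaT 0%N].
Proof.
rewrite /variance unlock.
rewrite -/(Ef P (etaT i)) -/(Ef P (etaT 0%N)) Ef_eta.
set m := Ef P (etaT 0%N).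
have e k : ((etaT k \- cst m) * (etaT k \- cst m))%R =
    (fun w => (fun r => (h r - m) * (h r - m)) (xi k w)).
  by apply/funext => w /=; change ((etaT k w - m) * (etaT k w - m) = (h (xi k w) - m) * (h (xi k w) - m)); rewrite eta_h.
rewrite !e (E_ident (fun r => (h r - m) * (h r - m)))//.
  by apply: measurable_funM; apply: measurable_funB => //; exact: mh.
by move=> r _; rewrite -expr2 sqr_ge0.
Qed.

Lemma indep_eta i j s t : i != j ->
  P ([set w | s <= etaT i w] `&` [set w | t <= etaT j w]) =
  (P [set w | (s <= etaT i w)%R] * P [set w | (t <= etaT j w)%R])%E.
Proof.
move=> ij.
have mG c : measurable [set r | c <= h r] by exact: (mes_ge c mh).
have eS k c : [set w | c <= etaT k w] = xi k @^-1` [set r | c <= h r].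
  by apply/funext => w /=; rewrite eta_h.
rewrite !eS.
have := hind [:: i; j] (fun k => if k == i then [set r | s <= h r] else [set r | t <= h r]).
rewrite /= inE ij => /(_ isT) H1.
have {H1} := H1 (fun k _ => ltac:(case: ifP => _; exact: mG)).
rewrite !big_cons !big_nil eqxx setIT mule1 ifN; last by rewrite eq_sym.
by [].
Qed.

Lemma Cov_eta i j : i != j -> covariance P (etaT i) (etaT j) = 0%E.
Proof.
move=> ij.
have bij : bm (fun w => etaT i w * etaT j w) by exact: bmM (bm_eta i) (bm_eta j).
rewrite covarianceE; [|exact: bm_L1 (bm_eta i)|exact: bm_L1 (bm_eta j)|exact: bm_L1 bij].
have -> : ('E_P[etaT i * etaT j] = (Ef P (fun w => etaT i w * etaT j w))%:E)%E.
  exact: EfE bij.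
rewrite (EfE (bm_eta i)) (EfE (bm_eta j)).
rewrite (Ef_prod_indep u u0 (meta i) (meta j) (eta_bnd i) (eta_bnd j)).
  by rewrite -EFinM subee.
by move=> s t; exact: indep_eta.
Qed.

Definition H k w := \sum_(i < k) etaT i w.

Lemma bm_H k : bm (H k).
Proof. by apply: (bm_sum etaT k) => i; exact: bm_eta. Qed.

Lemma Var_sum k : 'V_P[H k] = (k%:R * fine 'V_P[etaT 0%N])%:E /\
  forall j, (k <= j)%N -> covariance P (H k) (etaT j) = 0%E.
Proof.
have V0 : 'V_P[etaT 0%N] = (fine 'V_P[etaT 0%N])%:E.
  by rewrite fineK// variance_fin_num//; exact: bm_L2 (bm_eta 0%N).
elim: k => [|k [IH1 IH2]].
  have -> : H 0 = cst 0 by apply/funext => w; rewrite /H big_ord0.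
  by rewrite variance_cst mul0r; split => // j _; rewrite covariance_cst_l.
have -> : H k.+1 = (H k \+ etaT k)%R.
  by apply/funext => w; rewrite /H big_ord_recr.
have L2H := bm_L2 (bm_H k).
have L2e j := bm_L2 (bm_eta j).
split.
  rewrite varianceD// IH1 IH2// mule0 adde0 Var_eta V0 -EFinD.
  by rewrite -natr1 mulrDl mul1r.
move=> j kj.
rewrite covarianceDl// IH2 ?(ltnW kj)// Cov_eta ?adde0//.
by rewrite neq_ltn kj.
Qed.

Lemma E_H k : Ef P (H k) = k%:R * Ef P (etaT 0%N).
Proof.
rewrite /H (Ef_sum etaT k); last exact: bm_eta.
under eq_bigr do rewrite Ef_eta.
by rewrite sumr_const card_ord mulr_natl.
Qed.


Notation F := (tailF P (xi 0%N)).

Lemma mes_xi_ge i c : measurable [set w | c <= xi i w].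
Proof. exact: mes_ge. Qed.

Lemma F_noninc : {homo F : m n /~ n <= m}.
Proof.
move=> s t st; rewrite /tailF fine_le ?fin_num_measure//; try exact: mes_xi_ge.
rewrite le_measure ?inE//; try exact: mes_xi_ge.
by move=> w /= tw; rewrite (le_trans st).
Qed.

Lemma F01 r : 0 <= F r <= 1.
Proof.
rewrite /tailF fine_ge0//= -lee_fin fineK ?fin_num_measure//; try exact: mes_xi_ge.
exact: probability_le1 (mes_xi_ge _ _).
Qed.

Lemma mF : measurable_fun setT F.
Proof. exact: nonincreasing_measurable F_noninc. Qed.

Lemma bnd_int (f : R -> R) : measurable_fun setT f -> (forall r, `|f r| <= 1) ->
  lebesgue_measure.-integrable `[0, u] (EFin \o f).
Proof.
move=> mf f1; apply: measurable_bounded_integrable => //.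
- have := lebesgue_measure_itv `[0, u]%R; rewrite /= lte_fin u0 => ->; exact: ltry.
- exact: measurable_funTS.
- exists 1; split; first exact: num_real.
  by move=> M M1 x _ /=; rewrite (le_trans (f1 x))// ltW.
Qed.

Lemma Ef_eta0_lb : intTail P (xi 0%N) u - u * F u <= Ef P (etaT 0%N).
Proof.
have e0 w : 0 <= etaT 0%N w by case/andP: (eta_bnd 0%N w).
rewrite -lee_fin -(EfE (bm_eta 0%N)) (layer_cake (meta 0%N) e0).
have iF : lebesgue_measure.-integrable `[0, u] (EFin \o F).
  apply: bnd_int; first exact: mF.
  by move=> r; case/andP: (F01 r) => h1 h2; rewrite ger0_norm.
have iC : lebesgue_measure.-integrable `[0, u] (EFin \o (fun=> F u)).
  apply: bnd_int => // r.
  by case/andP: (F01 u) => h1 h2; rewrite ger0_norm.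
have eG : (intTail P (xi 0%N) u)%:E = (\int[lebesgue_measure]_(r in `[0%R, u]) (F r)%:E)%E.
  by rewrite /intTail /Rintegral fineK// integrable_fin_num.
have eC : (\int[lebesgue_measure]_(r in `[0%R, u]) (F u)%:E)%E = (u * F u)%:E.
  rewrite integral_cst//.
  have := lebesgue_measure_itv `[0, u]%R; rewrite /= lte_fin u0 => ->.
  by rewrite -EFinB subr0 -EFinM mulrC.
pose g r := fine (P [set w | r <= etaT 0%N w]).
have mE r : measurable [set w | r <= etaT 0%N w] by exact: mes_ge (meta 0%N).
have eg r : P (etaT 0%N @^-1` `[r, +oo[%classic) = (g r)%:E.
  rewrite /g fineK ?fin_num_measure//.
  by congr (P _); apply/funext => w /=; rewrite in_itv/= andbT.
have mg : measurable_fun setT g.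
  apply: nonincreasing_measurable => // s t st.
  rewrite /g fine_le ?fin_num_measure//.
  rewrite le_measure ?inE//.
  by move=> w /= tw; rewrite (le_trans st).
have mg' : measurable_fun setT (fun r : R => P (etaT 0%N @^-1` `[r, +oo[%classic)).
  apply: (eq_measurable_fun (fun r => (g r)%:E)) => [r _|]; first by rewrite eg.
  exact/measurable_EFinP.
rewrite EFinB eG -eC -integralB_EFin//.
apply: (@le_trans _ _ (\int[lebesgue_measure]_(r in `[0%R, u]) P (etaT 0%N @^-1` `[r, +oo[%classic))%E).
  apply: ge0_le_integral => //.
  - move=> r; rewrite /= in_itv/= => /andP[r0 ru].
    by rewrite -EFinD lee_fin subr_ge0 F_noninc.
  - apply/measurable_EFinP; apply: measurable_funB => //.
    exact: measurable_funTS mF.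
  - exact: measurable_funTS.
  - move=> r; rewrite /= in_itv/= => /andP[r0 ru].
    rewrite eg lee_fin lerBlDr /g /tailF -lee_fin EFinD !fineK ?fin_num_measure//;
      try exact: mes_xi_ge.
    apply: le_trans (measureU2 _ _ _); [|exact: mE|exact: mes_xi_ge].
    rewrite le_measure ?inE//; try exact: mes_xi_ge.
      by apply: measurableU; [exact: mE|exact: mes_xi_ge].
    move=> w /= rw; have [xu|xu] := ltP (xi 0%N w) u; [left|right] => //.
    by rewrite /etaT indicE mem_set ?mulr1.
apply: ge0_subset_integral => //.
- exact: measurable_funTS.
- by move=> r; rewrite /= !in_itv /= => /andP[-> _].
Qed.


Lemma mes_sumxi k : measurable_fun setT (fun w => \sum_(i < k) xi i w).
Proof.
elim: k => [|k IH].
  by rewrite (_ : (fun w => _) = cst 0)//; apply/funext => w; rewrite big_ord0.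
rewrite (_ : (fun w => _) = (fun w => \sum_(i < k) xi i w + xi k w)).
  exact: measurable_funD.
by apply/funext => w; rewrite big_ord_recr.
Qed.

Lemma core k (t Gx V : R) : 0 < t -> ('V_P[etaT 0%N] <= V%:E)%E ->
  k%:R * Gx - t / 2 <= k%:R * Ef P (etaT 0%N) ->
  (P [set w | (\sum_(i < k) xi i w - k%:R * Gx <= - t)%R] <= (4 * k%:R * V / t ^+ 2)%:E)%E.
Proof.
move=> t0 hV hm.
have mH : measurable_fun setT (H k) by exact: (bm_H k).1.
have mHk : H k \in mfun by rewrite inE.
pose Hm : {RV P >-> R} := mfun_Sub mHk.
have t2 : 0 < t / 2 by lra.
have cheb := @chebyshev _ _ _ P Hm (t / 2) t2.
have eHm : fine 'E_P[Hm] = k%:R * Ef P (etaT 0%N) by rewrite -E_H.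
apply: (le_trans _ (le_trans cheb _)).
  rewrite le_measure ?inE//.
  - have := @measurable_fun_le _ _ _ setT (fun w => \sum_(i < k) xi i w - k%:R * Gx)
      (cst (- t)) measurableT.
    rewrite setTI; apply => //.
    by apply: measurable_funB => //; exact: mes_sumxi.
  - apply: mes_ge.
    apply: measurableT_comp; first exact: normr_measurable.
    exact: measurable_funB.
  - move=> w /= hw; rewrite eHm.
    change (t / 2 <= `|H k w - k%:R * Ef P (etaT 0%N)|).
    have : H k w <= \sum_(i < k) xi i w by apply: ler_sum => i _; exact: eta_le.
    move=> hH; rewrite ler_normr; apply/orP; right; lra.
have [V1 _] := Var_sum k.
change (((t / 2) ^- 2)%:E * 'V_P[H k] <= (4 * k%:R * V / t ^+ 2)%:E)%E.
rewrite V1 -EFinM lee_fin.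
have v0 : 0 <= fine 'V_P[etaT 0%N] by rewrite fine_ge0// variance_ge0.
have vV : fine 'V_P[etaT 0%N] <= V.
  rewrite -lee_fin fineK//; last by rewrite variance_fin_num//; exact: bm_L2 (bm_eta 0%N).
have -> : (t / 2) ^- 2 = 4 / t ^+ 2 by field; lra.
have -> : 4 * k%:R * V / t ^+ 2 = 4 / t ^+ 2 * (k%:R * V) by field; lra.
apply: ler_wpM2l; first by rewrite divr_ge0// exprn_ge0// ltW.
by apply: ler_wpM2l.
Qed.

End core.


Lemma liminf_pos (R : realType) (v : (\bar R)^nat) : (0 < limn_einf v)%E ->
  exists2 c : R, 0 < c & \forall n \near \oo, (c%:E < v n)%E.
Proof.
rewrite limn_einf_lim (cvg_lim (@ereal_hausdorff R) (@cvg_einfs_sup R v)) => hs.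
have [_ [n _ <-] hn] := ereal_sup_gt hs.
have [c c0 hc] : exists2 c : R, 0 < c & (c%:E < einfs v n)%E.
  move: hn; case: (einfs v n) => [r| |] //=.
  - by rewrite lte_fin => r0; exists (r / 2); [lra| rewrite lte_fin; lra].
  - by move=> _; exists 1 => //; rewrite ltry.
exists c => //; exists n => // k /= nk.
apply: (lt_le_trans hc).
by apply: ereal_inf_lbound; exists k.
Qed.

Theorem corollary2 (d : measure_display) (T : measurableType d) (R : realType)
  (P : probability T R) (xi : nat -> T -> R)
  (x a y : R ^nat) (C : R) :
  (forall i, measurable_fun setT (xi i)) ->
  mutually_independent P xi ->
  identically_distributed P xi ->
  (forall i w, 0 <= xi i w) ->
  (exists l : R -> R, slowly_varying l /\
     \forall t \near +oo, tailF P (xi 0%N) t = t^-1 * l t) ->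
  (forall n, (0 < n)%N -> 0 < x n) ->
  (0 < limn_einf (fun n => (x n / (n%:R * intTail P (xi 0%N) (x n)))%:E))%E ->
  (forall n, (0 < n)%N -> 0 < a n) ->
  (exists2 L : R, 0 < L & a @ \oo --> L) ->
  (forall n, (0 < n)%N -> 0 < y n) ->
  y @ \oo --> +oo ->
  y =o_\oo x ->
  (fun n => n%:R * y n ^+ 2 * tailF P (xi 0%N) (x n)) @ \oo --> (0 : R) ->
  seq_equiv (fun n => tailF P (xi 0%N) (x n / y n))
            (fun n => y n * tailF P (xi 0%N) (x n)) ->
  seq_equiv (fun n => intTail P (xi 0%N) (x n / y n))
            (fun n => intTail P (xi 0%N) (x n)) ->
  0 < C ->
  (forall n, (0 < n)%N ->
     ('V_P[(fun w => xi 0%N w * \1_[set w' | xi 0%N w' < x n / y n] w)%R]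
       <= (C * (x n ^+ 2 * tailF P (xi 0%N) (x n)) / y n)%:E)%E) ->
  \forall n \near \oo, forall k : nat, (1 <= k <= n)%N ->
    (P [set w | (\sum_(i < k) xi i w - k%:R * intTail P (xi 0%N) (x n)
                  <= - (a n * x n))%R]
     <= (4 * C * k%:R * tailF P (xi 0%N) (x n) / (a n ^+ 2 * y n))%:E)%E.
Proof.
move=> mxi hind hid hpos _ x0 hlim a0 [L L0 aL] y0 yoo _ hny2 hFeq hGeq C0 hVar.
set F := tailF P (xi 0%N); set G := intTail P (xi 0%N).
have [c c0 hc] := liminf_pos _ _ hlim.
set eps := c * L / 8.
have eps0 : 0 < eps by rewrite /eps; apply: divr_gt0 => //; apply: mulr_gt0.
have hG := cvgr_dist_lt _ _ hGeq _ eps0.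
have hF := cvgr_dist_lt _ _ hFeq _ (ltac:(lra) : 0 < 1 / 2 :> R).
have hN := cvgr_dist_lt _ _ hny2 _ (ltac:(lra) : 0 < L / 16).
have ha := cvgr_dist_lt _ _ aL _ (ltac:(lra) : 0 < L / 2).
have hy := (cvgryPge y).1 yoo 1.
near=> n => k /andP[k1 kn].
have n0 : (0 < n)%N by near: n; exact: nbhs_infty_ge 1.
have hcn : (c%:E < (x n / (n%:R * G (x n)))%:E)%E by near: n; exact: hc.
have hGn : `|1 - G (x n / y n) / G (x n)| < eps by near: n; exact: hG.
have hFn : `|1 - F (x n / y n) / (y n * F (x n))| < 1 / 2 by near: n; exact: hF.
have hNn : `|0 - n%:R * y n ^+ 2 * F (x n)| < L / 16 by near: n; exact: hN.
have han : `|L - a n| < L / 2 by near: n; exact: ha.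
have hyn : 1 <= y n by near: n; exact: hy.
have xn0 : 0 < x n := x0 n n0.
have yn0 : 0 < y n by lra.
have an2 : L / 2 < a n by move: han; rewrite ltr_norml => /andP[_]; lra.
set u := x n / y n.
have u0 : 0 < u by exact: divr_gt0.
have uy : u * y n = x n by rewrite /u divfK// gt_eqF.
have nR1 : 1 <= n%:R :> R by rewrite ler1n.
have kn' : k%:R <= n%:R :> R by rewrite ler_nat.
have k0 : 0 <= k%:R :> R by [].
have F0 r : 0 <= F r by rewrite /F /tailF fine_ge0// measure_ge0.
set Fx := F (x n); set Fu := F u; set Gx := G (x n); set Gu := G u.
rewrite lte_fin in hcn.
have nG0 : 0 < n%:R * Gx.
  case: (ltP 0 (n%:R * Gx)) => // h; exfalso.
  have : x n / (n%:R * Gx) <= 0 by apply: mulr_ge0_le0; [exact: ltW|rewrite invr_le0].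
  lra.
have hcG : c * (n%:R * Gx) < x n by rewrite -ltr_pdivlMr.
have Gx0 : 0 < Gx by move: nG0; rewrite pmulr_rgt0// ltr0n.
set r1 := Gu / Gx.
have eGu : Gu = r1 * Gx by rewrite /r1 divfK// gt_eqF.
have hr1 : 1 - r1 < eps by apply: le_lt_trans hGn; exact: ler_norm.
set r2 := Fu / (y n * Fx).
have hr2 : 1 / 2 < r2 < 3 / 2.
  move: hFn; rewrite ltr_norml => /andP[h1 h2]; apply/andP; rewrite /r2 /Fu /Fx /u; split; lra.
have yF0 : y n * Fx != 0.
  apply/negP => /eqP h; move: hr2; rewrite /r2 h invr0 mulr0; lra.
have eFu : Fu = r2 * (y n * Fx) by rewrite /r2 divfK.
have hN' : n%:R * y n ^+ 2 * Fx < L / 16.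
  by apply: le_lt_trans hNn; rewrite sub0r normrN; exact: ler_norm.
have hEta := @Ef_eta0_lb _ _ _ P xi mxi hpos u u0.
rewrite -/F -/G -/Fu -/Gu in hEta.
have nD : n%:R * (Gx - Gu + u * Fu) <= a n * x n / 2.
  have h1 : n%:R * (Gx - Gu) <= eps * (n%:R * Gx).
    rewrite eGu; have : 0 <= n%:R * Gx by exact: ltW.
    case/andP: hr2 => _ _; nra.
  have h2 : eps * (n%:R * Gx) <= L / 8 * x n.
    rewrite /eps; have : 0 <= L by exact: ltW. nra.
  have h3 : n%:R * (u * Fu) = r2 * x n * (n%:R * Fx).
    by rewrite eFu -uy; ring.
  have h4 : n%:R * Fx <= n%:R * y n ^+ 2 * Fx.
    have : 1 <= y n ^+ 2 by rewrite expr2; nra.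
    have : 0 <= n%:R * Fx by apply: mulr_ge0 => //; exact: F0.
    nra.
  have h5 : r2 * x n * (n%:R * Fx) <= 3 / 2 * x n * (L / 16).
    have nF0 : 0 <= n%:R * Fx by apply: mulr_ge0 => //; exact: F0.
    have nFL : n%:R * Fx <= L / 16 by lra.
    have q0 : 0 <= x n * (n%:R * Fx) by apply: mulr_ge0 => //; exact: ltW.
    case/andP: hr2 => _ r23.
    have q1 : r2 * (x n * (n%:R * Fx)) <= 3 / 2 * (x n * (n%:R * Fx)) by nra.
    have q2 : x n * (n%:R * Fx) <= x n * (L / 16) by rewrite ler_pM2l.
    rewrite -mulrA; lra.
  nra.
have hm : k%:R * Gx - a n * x n / 2 <= k%:R * Ef P (etaT _ _ _ xi u 0%N).
  have hk : k%:R * (Gx - Gu + u * Fu) <= a n * x n / 2.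
    case: (leP 0 (Gx - Gu + u * Fu)) => hD.
      by apply: le_trans nD; apply: ler_wpM2r.
    have : 0 < a n * x n by apply: mulr_gt0 => //; lra.
    nra.
  nra.
have t0 : 0 < a n * x n by apply: mulr_gt0 => //; lra.
have := @core _ _ _ P xi mxi hind hid hpos u u0 k (a n * x n) Gx
  (C * (x n ^+ 2 * Fx) / y n) t0 (hVar n n0) hm.
move/le_trans; apply.
rewrite lee_fin le_eqVlt; apply/orP; left; apply/eqP.
rewrite /Fx; field.
by rewrite !gt_eqF//; lra.
Unshelve. all: by end_near.
Qed.
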